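(* Let $$D=\{(t_1,\dots,t_n)\in\mathbb{R}^n_{>0}: t_1^2\leq t_2,\ t_j^2\leq t_{j-1}t_{j+1}\text{ for all } j=2,\dots,n-1\}$$ and let $f:\mathbb{R}^n_{>0}\to\mathbb{R}$ be $f(t_1,\dots,t_n)=\frac{1}{t_1}+\frac{t_1}{t_2}+\cdots+\frac{t_{n-1}}{t_n}$. Let $a=(a_1,\dots,a_n),b=(b_1,\dots,b_n)\in D$ with $a_i\leq b_i$ for all $i=1,\dots,n$. Then $f(a)\geq f(b)$, and equality holds if and only if $a=b$. *)

(* Defs.v *)
From mathcomp Require Import all_boot all_order all_algebra.
Set Implicit Arguments. Unset Strict Implicit. Unset Printing Implicit Defensive.
Import Order.TTheory GRing.Theory Num.Theory.
Local Open Scope ring_scope.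

(* Points of R^n are functions t : 'I_n -> R; the paper's coordinate t_j
   (1 <= j <= n) is t (inord (j-1)), i.e. index 0-based. *)
Section D.
Variable R : realFieldType.
Variable n : nat.

Definition coord (t : 'I_n -> R) (j : nat) : R :=
  match insub j.-1 with Some i => t i | None => 0 end.

Definition inD (t : 'I_n -> R) : Prop :=
  (forall i : 'I_n, 0 < t i) /\
  coord t 1 ^+ 2 <= coord t 2 /\
  (forall j : nat, (2 <= j)%N -> (j <= n.-1)%N ->
     coord t j ^+ 2 <= coord t j.-1 * coord t j.+1).

Definition fD (t : 'I_n -> R) : R :=
  1 / coord t 1 + \sum_(1 <= j < n) coord t j / coord t j.+1.
End D.

(* Main.v *)
Require Import Defs.
From mathcomp Require Import all_boot all_order all_algebra.
From mathcomp Require Import ring lra zify.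
From Stdlib Require Import FunctionalExtensionality.
Import Order.TTheory GRing.Theory Num.Theory.
Local Open Scope ring_scope.

Lemma agm1 {R : realFieldType} (k : nat) (E : nat -> R) :
  (forall j, (j < k)%N -> 0 <= E j) -> 1 <= \prod_(0 <= j < k) E j ->
  k%:R <= \sum_(0 <= j < k) E j /\
  (\sum_(0 <= j < k) E j = k%:R -> forall j, (j < k)%N -> E j = 1).
Proof.
move=> E0 P1.
case: k E0 P1 => [|k] E0 P1.
  by split => //; rewrite big_geq.
have H := @leif_AGM R 'I_k.+1 'I_k.+1 (fun i => E i).
rewrite card_ord in H.
have Hs : \sum_(i in 'I_k.+1) E i = \sum_(0 <= j < k.+1) E j.
  by rewrite big_mkord; apply: eq_bigl => i; rewrite inE.
have Hp : \prod_(i in 'I_k.+1) E i = \prod_(0 <= j < k.+1) E j.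
  by rewrite big_mkord; apply: eq_bigl => i; rewrite inE.
rewrite Hs Hp in H.
have := H (fun i _ => E0 i (ltn_ord i)); clear H; case => H Heq.
set S := \sum_(0 <= j < k.+1) E j in H Heq *.
set mu := S / k.+1%:R in H Heq.
have kpos : 0 < (k.+1)%:R :> R by rewrite ltr0n.
have S0 : 0 <= S by rewrite /S big_mkord sumr_ge0 // => i _; apply: E0.
have mu0 : 0 <= mu by apply: divr_ge0 => //; apply: ltW.
have mu1 : 1 <= mu.
  rewrite leNgt; apply/negP => lt1.
  have := le_trans P1 H; rewrite leNgt.
  by rewrite exprn_ilt1.
split.
  by move: mu1; rewrite /mu ler_pdivlMr // mul1r.
move=> Sk.
have mueq : mu = 1 by rewrite /mu Sk divff // gt_eqF.
have Pe : \prod_(0 <= j < k.+1) E j = mu ^+ k.+1.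
  by apply/eqP; rewrite eq_le H mueq expr1n P1.
move: Heq; rewrite Pe eqxx => /esym /forall_inP Hall j jk.
have Ej : forall i, (i < k.+1)%N -> E i = E 0%N.
  move=> i ik.
  have := Hall (Ordinal ik) isT => /forall_inP /(_ (@ord0 k) isT) /eqP.
  by [].
have : S = E 0%N *+ k.+1.
  by rewrite /S (eq_big_nat _ _ (F2 := fun _ => E 0%N)) ?sumr_const_nat ?subn0 // => i /andP[_ ?]; apply: Ej.
rewrite Sk => h; have h2 : E 0%N * k.+1%:R = 1 * k.+1%:R by rewrite mulr_natr -h mul1r. have E01 := mulIf (lt0r_neq0 kpos) h2.
by rewrite Ej // -E01.
Qed.

Lemma abel {R : realFieldType} (k : nat) (c y : nat -> R) :
  (forall j, (j.+1 < k)%N -> c j.+1 <= c j) ->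
  (forall m, (m <= k)%N -> 0 <= \sum_(0 <= j < m) y j) ->
  c k.-1 * \sum_(0 <= j < k) y j <= \sum_(0 <= j < k) c j * y j.
Proof.
elim: k => [|k IH] cdec Sge.
  by rewrite !big_geq // mulr0.
rewrite !big_nat_recr //=.
have IH' := IH (fun j jk => cdec j (ltnW jk)) (fun m mk => Sge m (leqW mk)).
rewrite mulrDr lerD2r.
apply: le_trans IH'.
apply: ler_wpM2r; first by apply: Sge.
case: k {IH} cdec Sge => [|k] cdec Sge //.
exact: cdec.
Qed.

Lemma coordE {R : realFieldType} {n : nat} (t : 'I_n -> R) (i : 'I_n) :
  Defs.coord t i.+1 = t i.
Proof. by rewrite /Defs.coord /= valK. Qed.

Lemma coordS {R : realFieldType} {n : nat} (t : 'I_n -> R) {j : nat} (H : (j < n)%N) :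
  Defs.coord t j.+1 = t (Ordinal H).
Proof. by rewrite -coordE. Qed.

Definition tt0 {R : realFieldType} {n : nat} (t : 'I_n -> R) (j : nat) : R :=
  if j is 0 then 1 else Defs.coord t j.

Lemma tt_pos {R : realFieldType} {n : nat} (t : 'I_n -> R) :
  (forall i, 0 < t i) -> forall j, (j <= n)%N -> 0 < tt0 t j.
Proof. by move=> tp [|j] jn //=; rewrite (coordS t jn). Qed.

Lemma fD_tt {R : realFieldType} {n : nat} (t : 'I_n -> R) : (0 < n)%N ->
  fD t = \sum_(0 <= j < n) tt0 t j / tt0 t j.+1.
Proof.
move=> n0; rewrite /fD [RHS]big_ltn //=; congr (_ + _).
by apply: eq_big_nat => -[|j].
Qed.

Lemma ratio_le {R : realFieldType} (u v w : R) : 0 < u -> 0 < v -> 0 < w ->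
  v ^+ 2 <= u * w -> v / w <= u / v.
Proof.
move=> u0 v0 w0 h; rewrite -subr_ge0.
have -> : u / v - v / w = (u * w - v ^+ 2) / (v * w).
  by field; rewrite ?gt_eqF.
by rewrite divr_ge0 ?subr_ge0 // mulr_ge0 // ltW.
Qed.

Theorem proposition3p3 (R : realFieldType) (n : nat) (hn : (2 <= n)%N)
  (a b : 'I_n -> R) (ha : inD a) (hb : inD b)
  (hab : forall i : 'I_n, a i <= b i) :
  fD b <= fD a /\ (fD a = fD b <-> a = b).
Proof.
have n0 : (0 < n)%N by apply: leq_trans hn.
case: ha => apos [ha1 ha2]; case: hb => bpos [hb1 hb2].
set A := tt0 a; set B := tt0 b.
have Ap := tt_pos a apos; have Bp := tt_pos b bpos.
pose c j := B j / B j.+1.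
pose x j := B j.+1 * A j / (B j * A j.+1).
have cdec : forall j, (j.+1 < n)%N -> c j.+1 <= c j.
  move=> j jn; rewrite /c; apply: ratio_le; try (apply: Bp; lia).
  case: j jn => [|j] jn.
    by rewrite /B /= mul1r.
  by apply: hb2 => //; lia.
have x0 : forall j, (j < n)%N -> 0 <= x j.
  move=> j jn; rewrite /x; apply: ltW; apply: divr_gt0; apply: mulr_gt0;
    (apply: Ap || apply: Bp); lia.
have xprod : forall m, (m <= n)%N -> \prod_(0 <= j < m) x j = B m / A m.
  elim=> [|m IH] mn; first by rewrite big_geq // /A /B /= divr1.
  rewrite big_nat_recr // IH ?(ltnW mn) // /x /A /B.
  have := Ap m (ltnW mn); have := Bp m (ltnW mn).
  have := Ap m.+1 mn; have := Bp m.+1 mn.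
  by move=> h1 h2 h3 h4; rewrite /= in h1 h2 h3 h4 *; field; rewrite ?gt_eqF.
have BA1 : forall m, (m <= n)%N -> 1 <= B m / A m.
  case=> [|m] mn; first by rewrite /A /B /= divr1.
  rewrite ler_pdivlMr ?mul1r; last by apply: Ap.
  by rewrite /A /B /= (coordS a mn) (coordS b mn).
have agm : forall m, (m <= n)%N -> m%:R <= \sum_(0 <= j < m) x j /\
  (\sum_(0 <= j < m) x j = m%:R -> forall j, (j < m)%N -> x j = 1).
  move=> m mn; apply: agm1.
    by move=> j jm; apply: x0; lia.
  by rewrite xprod //; apply: BA1.
pose y j := x j - 1.
have sumy : forall m, \sum_(0 <= j < m) y j = \sum_(0 <= j < m) x j - m%:R.
  by move=> m; rewrite /y sumrB sumr_const_nat subn0.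
have Sge : forall m, (m <= n)%N -> 0 <= \sum_(0 <= j < m) y j.
  by move=> m mn; rewrite sumy subr_ge0; case: (agm m mn).
have diff : fD a - fD b = \sum_(0 <= j < n) c j * y j.
  rewrite !fD_tt // -sumrB; apply: eq_big_nat => j /andP[_ jn].
  rewrite /c /y /x /A /B.
  have := Ap j (ltnW jn); have := Bp j (ltnW jn).
  have := Ap j.+1 jn; have := Bp j.+1 jn.
  by move=> h1 h2 h3 h4; rewrite /= in h1 h2 h3 h4 *; field; rewrite ?gt_eqF.
have ab := @abel R n c y cdec Sge.
have cpos : 0 < c n.-1.
  by rewrite /c divr_gt0 //; apply: Bp; case: (n) n0.
have Sn := Sge n (leqnn n).
have le1 : fD b <= fD a.
  by rewrite -subr_ge0 diff; apply: le_trans ab; rewrite mulr_ge0 // ltW.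
split => //; split; last by move=> ->.
move=> eqab.
have Sn0 : \sum_(0 <= j < n) y j = 0.
  apply/eqP; rewrite eq_le Sn andbT.
  have : c n.-1 * \sum_(0 <= j < n) y j <= 0 by rewrite -diff eqab subrr in ab.
  by rewrite pmulr_rle0.
have [_ alleq] := agm n (leqnn n).
have x1 : forall j, (j < n)%N -> x j = 1.
  by apply: alleq; apply/eqP; rewrite -subr_eq0 -sumy Sn0.
apply: functional_extensionality => i.
have im : (i.+1 <= n)%N by [].
have := xprod i.+1 im.
rewrite (eq_big_nat _ _ (F2 := fun _ => 1)); last first.
  by move=> j /andP[_ ji]; apply: x1; apply: leq_trans ji im.
rewrite big1_eq /A /B /= !coordE => /esym /(congr1 (fun z => z * a i)).
by rewrite divfK ?gt_eqF // mul1r => ->.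
Qed.
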